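(* Let $\mathcal{S}=\{S_1,\dots,S_N\}\subset\mathbb{R}^Q_{\ge0}$ and suppose $\rho\notin\mathcal{P}$. Let $\eta\in\mathbb{R}^Q_{\ge0}$. There exists a diagonal matrix $\Delta$ with positive diagonal entries such that, under MaxWeight with matrix $\Delta$, $\lim_{t\to\infty}X(t)/t=\eta$, if and only if the following conditions hold: (1) $\eta=(\rho-\sum_m\alpha_mS_m)^+$ for some $\alpha_m\ge0$ with $\sum_m\alpha_m=1$; (2) there exists $v\in\mathbb{R}^Q_{\ge0}$ such that $\alpha_m>0$ implies $\langle v,S_m\rangle\ge\langle v,S_k\rangle$ for all $k$, and moreover $v_q=0$ if and only if $\eta_q=0$.
   Context: Model: $Q$ queues, discrete time. Arrivals $A(t)$ with $0\le A_q(t)\le\bar A_q<\infty$ and $\rho_q=\lim_{t\to\infty}\frac1t\sum_{s=0}^{t-1}A_q(s)\in(0,\infty)$. Departures $D_q(t)=\min\{S_q(t),X_q(t)\}$, $X(t+1)=X(t)+A(t)-D(t)$, $X(0)=0$. MaxWeight with matrix $\Delta$: $S(t)\in\arg\max_{S\in\mathcal{S}}\langle S,\Delta X(t)\rangle$. $(x)^+$ is the componentwise positive part. Stability region $\mathcal{P}=\{r\in\mathbb{R}^Q_{\ge0}: r\le\sum_n\alpha_nS_n\text{ for some }\alpha_n\ge0,\sum_n\alpha_n=1\}$. *)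

(* Defs.v *)
From HB Require Import structures.
From mathcomp Require Import all_boot all_order all_algebra.
From mathcomp Require Import all_classical all_reals all_analysis.
Set Implicit Arguments. Unset Strict Implicit. Unset Printing Implicit Defensive.
Import Order.TTheory GRing.Theory Num.Theory.
Import numFieldNormedType.Exports.
Local Open Scope ring_scope.

Section QueueDefs.
Variables (R : realType) (Q N : nat).

Definition dot (x y : 'I_Q -> R) : R := \sum_(q < Q) x q * y q.

Definition mxv (D : 'M[R]_Q) (x : 'I_Q -> R) : 'I_Q -> R :=
  fun i => \sum_(j < Q) D i j * x j.

Definition pospart (x : 'I_Q -> R) : 'I_Q -> R := fun q => Num.max 0 (x q).

Fixpoint qlen (A : nat -> 'I_Q -> R) (Sc : nat -> 'I_Q -> R) (t : nat)
  : 'I_Q -> R :=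
  match t with
  | 0 => fun _ => 0
  | t'.+1 => fun q => qlen A Sc t' q + A t' q - Num.min (Sc t' q) (qlen A Sc t' q)
  end.

Definition maxweight (S : 'I_N -> 'I_Q -> R) (D : 'M[R]_Q)
  (A : nat -> 'I_Q -> R) (sigma : nat -> 'I_N) : Prop :=
  forall t (k : 'I_N),
    let X := qlen A (fun s => S (sigma s)) t in
    dot (S k) (mxv D X) <= dot (S (sigma t)) (mxv D X).

Definition in_region (S : 'I_N -> 'I_Q -> R) (r : 'I_Q -> R) : Prop :=
  (forall q, 0 <= r q) /\
  exists alpha : 'I_N -> R,
    (forall n, 0 <= alpha n) /\ \sum_(n < N) alpha n = 1 /\
    forall q, r q <= \sum_(n < N) alpha n * S n q.

Definition pos_diag (D : 'M[R]_Q) : Prop :=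
  is_diag_mx D /\ forall i, 0 < D i i.

End QueueDefs.

(* Main.v *)
Require Import Defs.
From HB Require Import structures.
From mathcomp Require Import all_boot all_order all_algebra.
From mathcomp Require Import all_classical all_reals all_analysis.
From mathcomp.algebra_tactics Require Import ring lra.
Import Order.TTheory GRing.Theory Num.Theory.
Import numFieldNormedType.Exports.
Set Implicit Arguments. Unset Strict Implicit. Unset Printing Implicit Defensive.
Local Open Scope classical_set_scope.
Local Open Scope ring_scope.

Section Conv.
Variable R : realType.
Implicit Types (u w : nat -> R) (a b l : R).

Definition cnv u l := forall e : R, 0 < e ->
  exists M, forall n, (M <= n)%N -> `|u n - l| < e.

Lemma cnv_cvg u l : cnv u l <-> u @ \oo --> l.
Proof.
split.
  move=> H; apply/cvgrPdist_lt => e he; have [M hM] := H e he.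
  by exists M => // n /= hn; rewrite distrC; exact: hM.
move/cvgrPdist_lt => H e he; have [M _ hM] := H e he.
by exists M => n hn; rewrite distrC; exact: hM n hn.
Qed.

Lemma cnv_add u w a b : cnv u a -> cnv w b -> cnv (fun n => u n + w n) (a + b).
Proof. by move=> /cnv_cvg ha /cnv_cvg hb; apply/cnv_cvg; apply: cvgD. Qed.

Lemma cnv_opp u a : cnv u a -> cnv (fun n => - u n) (- a).
Proof. by move=> /cnv_cvg ha; apply/cnv_cvg; apply: cvgN. Qed.

Lemma cnv_sub u w a b : cnv u a -> cnv w b -> cnv (fun n => u n - w n) (a - b).
Proof. by move=> ha hb; apply: cnv_add => //; apply: cnv_opp. Qed.

Lemma cnv_mull k u a : cnv u a -> cnv (fun n => k * u n) (k * a).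
Proof. by move=> /cnv_cvg ha; apply/cnv_cvg; exact: cvgMl_tmp. Qed.

Lemma cnv_mulr k u a : cnv u a -> cnv (fun n => u n * k) (a * k).
Proof. by move=> /cnv_cvg ha; apply/cnv_cvg; exact: cvgMr_tmp. Qed.

Lemma cnv_const a : cnv (fun=> a) a.
Proof. by move=> e he; exists 0%N => n _; rewrite subrr normr0. Qed.

Lemma cnv_le u w a b : cnv u a -> cnv w b ->
  (exists M, forall n, (M <= n)%N -> u n <= w n) -> a <= b.
Proof.
move=> /cnv_cvg ha /cnv_cvg hb [M hM]; apply: (ler_cvg_to ha hb).
by exists M => // n /=; apply: hM.
Qed.

Lemma cnv_unique u a b : cnv u a -> cnv u b -> a = b.
Proof.
move=> ha hb; apply/eqP; rewrite eq_le.
by rewrite (cnv_le ha hb) ?(cnv_le hb ha) //; exists 0%N.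
Qed.

Lemma cnv_ev u w a : cnv u a -> (exists M, forall n, (M <= n)%N -> u n = w n) ->
  cnv w a.
Proof.
move=> ha [M hM] e he; have [M' hM'] := ha e he; exists (maxn M M') => n hn.
rewrite -hM; first by apply: hM'; apply: leq_trans hn; apply: leq_maxr.
by apply: leq_trans hn; apply: leq_maxl.
Qed.

Lemma cnv_sum (I : Type) (r : seq I) (u : nat -> I -> R) (l : I -> R) :
  (forall i, cnv (u^~ i) (l i)) ->
  cnv (fun n => \sum_(i <- r) u n i) (\sum_(i <- r) l i).
Proof.
move=> h; elim: r => [|i r IH].
  by under eq_fun do rewrite big_nil; rewrite big_nil; apply: cnv_const.
under eq_fun do rewrite big_cons; rewrite big_cons; exact: cnv_add.
Qed.

Definition strinc (f : nat -> nat) := forall n, (f n < f n.+1)%N.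

Lemma strinc_ge f : strinc f -> forall n, (n <= f n)%N.
Proof.
move=> hf; elim=> [|n IH] //; apply: leq_ltn_trans IH (hf n).
Qed.

Lemma strinc_mono f : strinc f -> forall n m, (n <= m)%N -> (f n <= f m)%N.
Proof.
move=> hf n m /subnK <-; elim: (m - n)%N => [|k IH] //.
by rewrite addSn; apply: leq_trans IH (ltnW (hf _)).
Qed.

Lemma cnv_subseq u a f : strinc f -> cnv u a -> cnv (fun k => u (f k)) a.
Proof.
move=> hf ha e he; have [M hM] := ha e he; exists M => n hn.
by apply: hM; apply: leq_trans hn (strinc_ge hf n).
Qed.

End Conv.

Section BW.
Variable R : realType.

Lemma bw1 (u : nat -> R) (B : R) : (forall t, `|u t| <= B) ->
  exists f, strinc f /\ exists l, cnv (fun k => u (f k)) l.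
Proof.
move=> hB.
have hb : bounded_fun u.
  rewrite /bounded_near; near=> M => t _ /=.
  apply: le_trans (hB t) _; near: M; apply: nbhs_pinfty_ge; exact: num_real.
have [f hf /cvg_ex [l hl]] := bolzano_weierstrass hb.
exists f; split.
  move=> n; rewrite ltnNge; apply/negP => h.
  have : (f n.+1 <= f n)%O by [].
  by rewrite hf /= ltnn.
by exists l; apply/cnv_cvg.
Unshelve. all: end_near. Qed.

Lemma bw_multi (m : nat) (u : nat -> 'I_m -> R) (B : R) :
  (forall t i, `|u t i| <= B) ->
  exists f, strinc f /\ exists l : 'I_m -> R, forall i, cnv (fun k => u (f k) i) (l i).
Proof.
elim: m u => [|m IH] u hB.
  exists id; split; first by move=> n.
  by exists (fun _ => 0) => [[]].
have [f1 [hf1 [l1 hl1]]] := IH (fun t j => u t (lift ord_max j)) (fun t j => hB t _).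
have [f2 [hf2 [l0 hl0]]] := bw1 (fun k => hB (f1 k) ord_max).
exists (fun k => f1 (f2 k)); split.
  move=> n; exact: leq_trans (hf1 (f2 n)) (strinc_mono hf1 (hf2 n)).
exists (fun i => oapp l1 l0 (unlift ord_max i)) => i.
case: unliftP => [j ->|->] /=; first exact: (cnv_subseq hf2 (hl1 j)).
exact: hl0.
Qed.

End BW.

Section Anal.
Variable R : realType.

Lemma sq_lt (x e : R) : 0 < e -> x ^+ 2 < e ^+ 2 -> `|x| < e.
Proof.
move=> he h; rewrite ltNge; apply/negP => hx.
have hn : `|x| ^+ 2 = x ^+ 2 by rewrite real_normK ?num_real.
rewrite -hn in h; nra.
Qed.

Lemma final_sq (u : nat -> R) (d : R) : 0 < d ->
  (forall eps, 0 < eps -> exists C, forall t, d * u t ^+ 2 <= eps * t%:R ^+ 2 + C * t%:R) ->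
  cnv (fun t => u t / t%:R) 0.
Proof.
move=> hd H e he.
have he2 : 0 < d * e ^+ 2 / 2 by rewrite divr_gt0 ?mulr_gt0 ?exprn_gt0.
have [C hC] := H _ he2.
set x := 2 * `|C| / (d * e ^+ 2).
have hx : 0 <= x by rewrite /x divr_ge0 ?mulr_ge0 ?normr_ge0 ?ltW ?mulr_gt0 ?exprn_gt0.
exists (Num.Def.archi_bound x).+1 => n hn.
have hxn : x < n%:R.
  apply: lt_le_trans (archi_boundP hx) _; rewrite ler_nat; exact: ltnW.
have hn0 : 0 < n%:R :> R by apply: le_lt_trans hx hxn.
rewrite subr0; apply: sq_lt => //.
have h1 := hC n.
have hC1 : C * n%:R <= `|C| * n%:R by apply: ler_wpM2r; [exact: ltW | exact: real_ler_norm (num_real C)].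
have hC2 : 2 * `|C| < d * e ^+ 2 * n%:R.
  by move: hxn; rewrite /x ltr_pdivrMr ?mulr_gt0 ?exprn_gt0 // => h; nra.
rewrite expr_div_n ltr_pdivrMr ?exprn_gt0 //.
rewrite -(ltr_pM2l hd).
have : d * u n ^+ 2 <= d * e ^+ 2 / 2 * n%:R ^+ 2 + `|C| * n%:R by lra.
move=> h2; apply: le_lt_trans h2 _.
have hCn : `|C| * n%:R * 2 < d * e ^+ 2 * n%:R * n%:R.
  by rewrite mulrAC -(mulrA _ n%:R) ; rewrite [X in X < _]mulrC; nra.
rewrite expr2; nra.
Qed.

End Anal.

Section Abel.
Variable R : realType.

Lemma abel_id (y e : nat -> R) t :
  \sum_(s < t) y s * e s =
  y t * (\sum_(s < t) e s) - \sum_(s < t) (y s.+1 - y s) * (\sum_(r < s.+1) e r).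
Proof.
elim: t => [|t IH]; first by rewrite !big_ord0 mulr0 subr0.
rewrite !big_ord_recr /= IH.
ring.
Qed.

Lemma abel (y e : nat -> R) (K : R) : y 0%N = 0 ->
  (forall s, `|y s.+1 - y s| <= K) ->
  cnv (fun t => (\sum_(s < t) e s) / t%:R) 0 ->
  forall eps, 0 < eps -> exists C, forall t,
    `|\sum_(s < t) y s * e s| <= eps * t%:R ^+ 2 + C * t%:R.
Proof.
move=> y0 hK hB eps heps.
have K0 : 0 <= K by apply: le_trans (hK 0%N); exact: normr_ge0.
have hy : forall t, `|y t| <= K * t%:R.
  elim=> [|t IH]; first by rewrite y0 normr0 mulr0.
  have := ler_normD (y t.+1 - y t) (y t); rewrite subrK => h.
  apply: le_trans h _; rewrite -natr1 mulrDr mulr1 addrC; exact: lerD.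
set B := fun t => \sum_(s < t) e s.
have heps' : 0 < eps / (2 * K + 1) by rewrite divr_gt0 // ltr_pwDr // mulr_ge0.
set eps' := eps / (2 * K + 1).
have [M hM] := hB _ heps'.
set C0 := \sum_(t < M) `|B t|.
have hB' : forall t, `|B t| <= eps' * t%:R + C0.
  move=> t; case: (ltnP t M) => htM.
    have -> : `|B t| = (fun i : 'I_M => `|B i|) (Ordinal htM) by [].
    rewrite /C0 (bigD1 (Ordinal htM)) //=.
    have h1 : 0 <= \sum_(i < M | i != Ordinal htM) `|B i| by apply: sumr_ge0.
    have h2 : 0 <= eps' * t%:R by rewrite mulr_ge0 // ltW.
    lra.
  case: t htM => [|t] htM.
    by rewrite /B big_ord0 normr0 mulr0 add0r sumr_ge0.
  have := hM _ htM; rewrite subr0 normrM normfV normr_nat.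
  rewrite ltr_pdivrMr ?ltr0n // => h.
  have : 0 <= C0 by apply: sumr_ge0.
  rewrite /B /eps'; lra.
exists (2 * K * C0) => t.
rewrite abel_id.
have hBt : forall s, (s <= t)%N -> `|B s| <= eps' * t%:R + C0.
  move=> s hs; apply: le_trans (hB' s) _; rewrite lerD2r ler_wpM2l ?ler_nat //.
  exact: ltW.
have h1 : `|y t * B t| <= K * t%:R * (eps' * t%:R + C0).
  rewrite normrM; exact: ler_pM (normr_ge0 _) (normr_ge0 _) (hy t) (hBt t (leqnn t)).
have h2 : `|\sum_(s < t) (y s.+1 - y s) * B s.+1| <= K * t%:R * (eps' * t%:R + C0).
  apply: le_trans (ler_norm_sum _ _ _) _.
  have hs : forall i : 'I_t, `|(y i.+1 - y i) * B i.+1| <= K * (eps' * t%:R + C0).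
    move=> i; rewrite normrM.
    exact: ler_pM (normr_ge0 _) (normr_ge0 _) (hK i) (hBt _ (ltn_ord i)).
  apply: le_trans (ler_sum _ (fun i _ => hs i)) _.
  rewrite sumr_const card_ord -mulr_natr; lra.
have h3 : eps' * (2 * K + 1) = eps.
  rewrite /eps' divfK //; apply/negP => /eqP h; lra.
have h4 : 0 <= eps' * t%:R ^+ 2 by rewrite mulr_ge0 // ltW.
rewrite -h3; apply: le_trans (ler_normB _ _) _.
rewrite expr2 in h4 *; lra.
Qed.

End Abel.

Section Diag.
Variables (R : realType) (Q : nat).

Lemma mxv_diag (d : 'I_Q -> R) x q : mxv (diag_mx (\row_i d i)) x q = d q * x q.
Proof.
rewrite /mxv (bigD1 q) //= big1 ?addr0; first by rewrite !mxE eqxx mulr1n.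
by move=> j hj; rewrite !mxE eq_sym (negbTE hj) mulr0n mul0r.
Qed.

Lemma pos_diag_diag (d : 'I_Q -> R) : (forall q, 0 < d q) -> pos_diag (diag_mx (\row_i d i)).
Proof.
move=> hd; split; first exact: diag_mx_is_diag.
by move=> i; rewrite !mxE eqxx mulr1n.
Qed.

Lemma mxv_pos_diag (D : 'M[R]_Q) x q : pos_diag D -> mxv D x q = D q q * x q.
Proof.
move=> [hD _]; rewrite /mxv (bigD1 q) //= big1 ?addr0 //.
by move=> j hj; move/is_diag_mxP: hD => hD; rewrite hD ?mul0r // eq_sym.
Qed.

Lemma min_cases (a b : R) : (Num.min a b = a /\ a <= b) \/ (Num.min a b = b /\ b < a).
Proof.
case: (leP a b) => h; [left | right]; split => //.
Qed.
End Diag.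

Section MaxC.
Variable R : realType.
Lemma max_cases (a b : R) : (Num.max a b = b /\ a <= b) \/ (Num.max a b = a /\ b < a).
Proof.
case: (leP a b) => h; [left | right]; split => //.
Qed.
End MaxC.

Section Model.
Variables (R : realType) (Q N : nat) (S : 'I_N -> 'I_Q -> R) (A : nat -> 'I_Q -> R)
  (Abar rho : 'I_Q -> R).
Hypothesis hS : forall n q, 0 <= S n q.
Hypothesis hA : forall t q, 0 <= A t q <= Abar q.

Definition cS := \sum_(n < N) \sum_(q < Q) S n q.

Lemma S_le_c n q : S n q <= cS.
Proof.
rewrite /cS (bigD1 n) //= (bigD1 q) //=.
have h1 : 0 <= \sum_(i < Q | i != q) S n i by apply: sumr_ge0.
have h2 : 0 <= \sum_(i < N | i != n) \sum_(q0 < Q) S i q0.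
  by apply: sumr_ge0 => i _; apply: sumr_ge0.
lra.
Qed.

Lemma qlen_ge0 Sc t q : 0 <= qlen A Sc t q.
Proof.
case: t => [|t] //=.
have := hA t q; case: (min_cases (Sc t q) (qlen A Sc t q)) => [[-> h]|[-> h]] /andP[h1 h2]; lra.
Qed.

Section IfDir.
Variables (eta : 'I_Q -> R) (alpha : 'I_N -> R) (v dd : 'I_Q -> R) (sigma : nat -> 'I_N).
Hypothesis heta0 : forall q, 0 <= eta q.
Hypothesis halpha0 : forall n, 0 <= alpha n.
Hypothesis halpha1 : \sum_(n < N) alpha n = 1.
Hypothesis heta : eta = pospart (fun q => rho q - \sum_(n < N) alpha n * S n q).
Hypothesis hv : forall m : 'I_N, 0 < alpha m -> forall k : 'I_N, dot v (S k) <= dot v (S m).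
Hypothesis hdd : forall q, 0 < dd q.
Hypothesis hddv : forall q, dd q * eta q = v q.
Hypothesis hmw : maxweight S (diag_mx (\row_i dd i)) A sigma.

Let X t q := qlen A (fun s => S (sigma s)) t q.
Let T q := \sum_(n < N) alpha n * S n q.
Let Y t q := X t q - eta q * t%:R.
Let K q := Abar q + eta q + cS.

Lemma key t : \sum_(q < Q) dd q * Y t q * (T q - S (sigma t) q) <= 0.
Proof.
set DX := mxv (diag_mx (\row_i dd i)) (X t).
set W := fun n => \sum_(q < Q) dd q * Y t q * (S n q - S (sigma t) q).
have hW : forall n, W n = (dot (S n) DX - dot (S (sigma t)) DX)
    - t%:R * (dot v (S n) - dot v (S (sigma t))).
  move=> n; rewrite /W /dot -!sumrB mulr_sumr -sumrB; apply: eq_bigr => q _.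
  rewrite /DX mxv_diag -hddv /Y; ring.
have hWn : forall n, alpha n * W n <= 0.
  move=> n; have [/eqP h0|hn0] := boolP (alpha n == 0); first by rewrite h0 mul0r.
  have hn : 0 < alpha n by rewrite lt0r hn0 halpha0.
  apply: mulr_ge0_le0; first exact: ltW.
  rewrite hW; have h1 := hmw t n; have h2 := hv hn (sigma t).
  have h3 : 0 <= t%:R :> R by [].
  rewrite /= -/(X t) -/DX in h1.
  nra.
have -> : \sum_(q < Q) dd q * Y t q * (T q - S (sigma t) q) = \sum_(n < N) alpha n * W n.
  rewrite /W.
  under [RHS]eq_bigr => n _ do rewrite mulr_sumr.
  rewrite exchange_big /=; apply: eq_bigr => q _.
  have -> : T q - S (sigma t) q = \sum_(n < N) alpha n * (S n q - S (sigma t) q).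
    rewrite /T; under [RHS]eq_bigr => n _ do rewrite mulrBr.
    by rewrite sumrB -mulr_suml halpha1 mul1r.
  rewrite mulr_sumr; apply: eq_bigr => n _; ring.
by apply: sumr_le0 => n _; exact: hWn.
Qed.

Lemma drift t : \sum_(q < Q) dd q * (Y t.+1 q ^+ 2 - Y t q ^+ 2) <=
  \sum_(q < Q) dd q * (2 * (Y t q * (A t q - rho q)) + (2 * cS ^+ 2 + K q ^+ 2)).
Proof.
have hk := key t.
have perq : forall q, dd q * (Y t.+1 q ^+ 2 - Y t q ^+ 2) <=
    dd q * (2 * (Y t q * (A t q - rho q)) + (2 * cS ^+ 2 + K q ^+ 2))
    + 2 * (dd q * Y t q * (T q - S (sigma t) q)).
  move=> q.
  have hx : 0 <= X t q by apply: qlen_ge0.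
  have /andP[ha1 ha2] := hA t q.
  have hs0 := hS (sigma t) q; have hsc := S_le_c (sigma t) q.
  have hd := hdd q.
  have het := heta0 q.
  have ht : 0 <= t%:R :> R by [].
  have hY' : Y t.+1 q = Y t q + (A t q - eta q - Num.min (S (sigma t) q) (X t q)).
    by rewrite /Y /X /= -natr1; ring.
  have hYx : Y t q = X t q - eta q * t%:R by [].
  have hm := min_cases (S (sigma t) q) (X t q).
  have he : eta q = Num.max 0 (rho q - T q) by rewrite {1}heta.
  rewrite hY'; move: hYx hm he hx ha1 ha2 hs0 hsc.
  move: (Y t q) (X t q) (A t q) (S (sigma t) q) (Num.min (S (sigma t) q) (X t q)) (T q).
  move=> y x a s m Tq hYx hm he hx ha1 ha2 hs0 hsc.
  have hc : dd q * (y * (rho q - eta q - Tq)) <= 0.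
    case: (max_cases 0 (rho q - Tq)) => [[hm' h]|[hm' h]]; rewrite hm' in he.
      by rewrite he (_ : rho q - (rho q - Tq) - Tq = 0) ?mulr0 //; ring.
    apply: mulr_ge0_le0; first exact: ltW.
    rewrite hYx he; nra.
  have h2 : y * (s - m) <= cS ^+ 2.
    rewrite hYx; case: hm => [[-> _]|[-> h]]; first by rewrite subrr mulr0 sqr_ge0.
    have h4 : 0 <= eta q * t%:R * (s - x) by rewrite !mulr_ge0 // subr_ge0 ltW.
    have h5 : x * (s - x) <= cS ^+ 2.
      have h8 : 0 <= (s - x) * (s - x) by apply: mulr_ge0; lra.
      have h9 : 0 <= x * s by apply: mulr_ge0.
      have h6 : x * (s - x) <= s * s by nra.
      have h7 : s * s <= cS ^+ 2 by rewrite expr2; apply: ler_pM.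
      lra.
    nra.
  have h3 : (a - eta q - m) ^+ 2 <= K q ^+ 2.
    have [hm1 hm2] : 0 <= m /\ m <= s by case: hm => [[-> _]|[-> h]]; split; lra.
    have hK1 : 0 <= K q - (a - eta q - m) by rewrite /K; lra.
    have hK2 : 0 <= K q + (a - eta q - m) by rewrite /K; lra.
    have := mulr_ge0 hK1 hK2; rewrite !expr2; lra.
  have h2' : dd q * (y * (s - m)) <= dd q * cS ^+ 2 by rewrite ler_pM2l.
  have h3' : dd q * (a - eta q - m) ^+ 2 <= dd q * K q ^+ 2 by rewrite ler_pM2l.
  nra.
apply: le_trans (ler_sum _ (fun q _ => perq q)) _.
rewrite big_split /= -mulr_sumr; lra.
Qed.

Let K2 q := 2 * cS ^+ 2 + K q ^+ 2.

Lemma Y0 q : Y 0 q = 0.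
Proof. by rewrite /Y /X /= mulr0 subr0. Qed.

Lemma stepY_bd s q : `|Y s.+1 q - Y s q| <= K q.
Proof.
have hx : 0 <= X s q by apply: qlen_ge0.
have /andP[ha1 ha2] := hA s q.
have hs0 := hS (sigma s) q; have hsc := S_le_c (sigma s) q.
have het := heta0 q.
have -> : Y s.+1 q - Y s q = A s q - eta q - Num.min (S (sigma s) q) (X s q).
  by rewrite /Y /X /= -natr1; ring.
have hm := min_cases (S (sigma s) q) (X s q).
move: hm hx ha1 ha2 hs0 hsc.
move: (X s q) (A s q) (S (sigma s) q) (Num.min (S (sigma s) q) (X s q)).
move=> x a s' m hm hx ha1 ha2 hs0 hsc.
have [hm1 hm2] : 0 <= m /\ m <= s' by case: hm => [[-> _]|[-> h]]; split; lra.
rewrite ler_norml /K; apply/andP; split; lra.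
Qed.

Lemma V_bound t : \sum_(q < Q) dd q * Y t q ^+ 2 <=
  \sum_(q < Q) dd q * (2 * \sum_(s < t) Y s q * (A s q - rho q) + t%:R * K2 q).
Proof.
elim: t => [|t IH].
  rewrite big1 ?sumr_ge0 // => q _; last by rewrite Y0 expr0n mulr0.
  by rewrite big_ord0 mulr0 mul0r addr0 mulr0.
have -> : \sum_(q < Q) dd q * Y t.+1 q ^+ 2 =
  \sum_(q < Q) dd q * Y t q ^+ 2 + \sum_(q < Q) dd q * (Y t.+1 q ^+ 2 - Y t q ^+ 2).
  by rewrite -big_split /=; apply: eq_bigr => q _; ring.
apply: le_trans (lerD IH (drift t)) _.
rewrite -big_split /=; apply: ler_sum => q _.
rewrite big_ord_recr /= -natr1 /K2; lra.
Qed.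

Lemma Ydiv q0 (hrho : forall q, cnv (fun t => (\sum_(s < t) A s q) / t%:R) (rho q)) :
  cnv (fun t => Y t q0 / t%:R) 0.
Proof.
have hab : forall q eps, 0 < eps -> exists C, forall t,
    `|\sum_(s < t) Y s q * (A s q - rho q)| <= eps * t%:R ^+ 2 + C * t%:R.
  move=> q; apply: (@abel _ (Y^~ q) (fun s => A s q - rho q) (K q)).
  - exact: Y0.
  - move=> s; exact: stepY_bd.
  - have h := cnv_sub (hrho q) (cnv_const (rho q)); rewrite subrr in h.
    apply: (cnv_ev h); exists 1%N => n hn.
    rewrite sumrB sumr_const card_ord mulrBl -[rho q *+ n]mulr_natr mulfK //.
    by rewrite pnatr_eq0 -lt0n.
apply: (@final_sq _ _ (dd q0)) => // eps heps.
set Dsum := \sum_(q < Q) dd q.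
have hD0 : 0 <= Dsum by apply: sumr_ge0 => q _; exact: ltW.
have heps1 : 0 < eps / (2 * Dsum + 1) by rewrite divr_gt0 // ltr_pwDr // mulr_ge0.
have [Cf hCf] := fin_all_exists (fun q => hab q _ heps1).
set eps1 := eps / (2 * Dsum + 1).
exists (\sum_(q < Q) dd q * (2 * `|Cf q| + K2 q)) => t.
have h1 : dd q0 * Y t q0 ^+ 2 <= \sum_(q < Q) dd q * Y t q ^+ 2.
  rewrite (bigD1 q0) //= lerDl; apply: sumr_ge0 => q _.
  by rewrite mulr_ge0 ?sqr_ge0 // ltW.
apply: le_trans h1 _; apply: le_trans (V_bound t) _.
have h2 : \sum_(q < Q) dd q * (2 * \sum_(s < t) Y s q * (A s q - rho q) + t%:R * K2 q)
    <= \sum_(q < Q) dd q * (2 * (eps1 * t%:R ^+ 2 + `|Cf q| * t%:R) + t%:R * K2 q).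
  apply: ler_sum => q _; rewrite ler_pM2l //.
  have := hCf q t.
  have hCq : Cf q * t%:R <= `|Cf q| * t%:R.
    by apply: ler_wpM2r => //; exact: real_ler_norm (num_real _).
  have := real_ler_norm (num_real (\sum_(s < t) Y s q * (A s q - rho q))).
  rewrite /eps1; lra.
apply: le_trans h2 _.
have -> : \sum_(q < Q) dd q * (2 * (eps1 * t%:R ^+ 2 + `|Cf q| * t%:R) + t%:R * K2 q)
    = 2 * eps1 * t%:R ^+ 2 * Dsum + t%:R * \sum_(q < Q) dd q * (2 * `|Cf q| + K2 q).
  rewrite /Dsum !mulr_sumr -big_split /=; apply: eq_bigr => q _; ring.
have h3 : eps1 * (2 * Dsum + 1) = eps.
  rewrite /eps1 divfK //; apply/negP => /eqP h; lra.
have h4 : 0 <= eps1 * t%:R ^+ 2 by rewrite mulr_ge0 // ltW.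
rewrite -h3; nra.
Qed.

Lemma Xconv q0 (hrho : forall q, cnv (fun t => (\sum_(s < t) A s q) / t%:R) (rho q)) :
  cnv (fun t => X t q0 / t%:R) (eta q0).
Proof.
have h := cnv_add (Ydiv q0 hrho) (cnv_const (eta q0)); rewrite add0r in h.
apply: (cnv_ev h); exists 1%N => n hn.
rewrite /Y mulrBl mulfK ?subrK //.
by rewrite pnatr_eq0 -lt0n.
Qed.

End IfDir.
End Model.

Section Inv.
Variable R : realType.
Lemma cnv_inv (a : R) : cnv (fun t => a / t%:R) 0.
Proof.
move=> e he.
have hx : 0 <= `|a| / e by rewrite divr_ge0 // ltW.
exists (Num.Def.archi_bound (`|a| / e)).+1 => n hn.
have hxn : `|a| / e < n%:R.
  apply: lt_le_trans (archi_boundP hx) _; rewrite ler_nat; exact: ltnW.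
have hn0 : 0 < n%:R :> R by apply: le_lt_trans hx hxn.
rewrite subr0 normrM normfV normr_nat ltr_pdivrMr //.
by move: hxn; rewrite ltr_pdivrMr // mulrC.
Qed.

Lemma indic_sum (N : nat) (i : 'I_N) : \sum_(n < N) ((i == n)%:R : R) = 1.
Proof.
rewrite (bigD1 i) //= eqxx big1 ?addr0 // => n hn.
by rewrite eq_sym (negbTE hn).
Qed.
End Inv.

Section OnlyIf.
Variables (R : realType) (Q N : nat) (S : 'I_N -> 'I_Q -> R) (A : nat -> 'I_Q -> R)
  (Abar rho : 'I_Q -> R).
Hypothesis hS : forall n q, 0 <= S n q.
Hypothesis hA : forall t q, 0 <= A t q <= Abar q.
Hypothesis hrho : forall q, cnv (fun t => (\sum_(s < t) A s q) / t%:R) (rho q).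
Variables (eta : 'I_Q -> R) (D : 'M[R]_Q).
Hypothesis hN : (0 < N)%N.
Hypothesis heta0 : forall q, 0 <= eta q.
Hypothesis hD : pos_diag D.
Hypothesis hconv : forall sigma, maxweight S D A sigma -> forall q,
  cnv (fun t => qlen A (fun s => S (sigma s)) t q / t%:R) (eta q).

Let i0 : 'I_N := Ordinal hN.
Definition ch (x : 'I_Q -> R) : 'I_N := [arg max_(i > i0) dot (S i) (mxv D x)]%O.

Lemma chP x j : dot (S j) (mxv D x) <= dot (S (ch x)) (mxv D x).
Proof. rewrite /ch; case: arg_maxP => // i _ h; exact: h. Qed.

Fixpoint Xs t : 'I_Q -> R := match t with
  | 0 => fun _ => 0
  | t'.+1 => fun q => Xs t' q + A t' q - Num.min (S (ch (Xs t')) q) (Xs t' q)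
  end.

Definition sigma0 t := ch (Xs t).

Lemma qlen_Xs t : qlen A (fun s => S (sigma0 s)) t = Xs t.
Proof.
elim: t => [|t IH] //=; apply/funext => q; by rewrite IH.
Qed.

Lemma mw0 : maxweight S D A sigma0.
Proof. by move=> t k /=; rewrite qlen_Xs; exact: chP. Qed.

Let X t q := qlen A (fun s => S (sigma0 s)) t q.
Let freq t n := (\sum_(s < t) ((sigma0 s == n)%:R : R)) / t%:R.

Lemma indic_le1 (b : bool) : (b%:R : R) <= 1.
Proof. by case: b; rewrite ?ler01 ?lexx. Qed.

Lemma cnt_le t n : \sum_(s < t) ((sigma0 s == n)%:R : R) <= t%:R.
Proof.
apply: le_trans (ler_sum (G := fun _ => 1) _ (fun s _ => indic_le1 _)) _.
by rewrite sumr_const card_ord.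
Qed.

Lemma freq_ge0 t n : 0 <= freq t n.
Proof. by rewrite /freq divr_ge0 // sumr_ge0. Qed.

Lemma freq_bd t n : `|freq t n| <= 1.
Proof.
rewrite ger0_norm ?freq_ge0 //; case: t => [|t]; first by rewrite /freq invr0 mulr0.
by rewrite /freq ler_pdivrMr ?ltr0n // mul1r cnt_le.
Qed.

Lemma freq_sum t : (0 < t)%N -> \sum_(n < N) freq t n = 1.
Proof.
move=> ht; rewrite /freq -mulr_suml exchange_big /=.
under eq_bigr do rewrite indic_sum.
by rewrite sumr_const card_ord -[1 *+ t]mulr_natl mulr1 divff // pnatr_eq0 -lt0n.
Qed.

Lemma Xid t q : X t q = \sum_(s < t) A s q - \sum_(s < t) Num.min (S (sigma0 s) q) (X s q).
Proof.
elim: t => [|t IH]; first by rewrite !big_ord0 subr0.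
rewrite !big_ord_recr /=.
have -> : X t.+1 q = X t q + A t q - Num.min (S (sigma0 t) q) (X t q) by [].
rewrite IH; ring.
Qed.

Lemma Ssum t q : (0 < t)%N ->
  \sum_(s < t) S (sigma0 s) q = t%:R * \sum_(n < N) freq t n * S n q.
Proof.
move=> ht; rewrite mulr_sumr.
have ht' : (t%:R : R) != 0 by rewrite pnatr_eq0 -lt0n.
rewrite [RHS](eq_bigr (fun n => (\sum_(s < t) ((sigma0 s == n)%:R : R)) * S n q)); last first.
  by move=> n _; rewrite /freq; field.
under [RHS]eq_bigr do rewrite mulr_suml.
rewrite [RHS]exchange_big /=; apply: eq_bigr => s _.
rewrite (bigD1 (sigma0 s)) //= eqxx mul1r big1 ?addr0 // => n hn.
by rewrite eq_sym (negbTE hn) mul0r.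
Qed.

Lemma only_if_core : exists alpha : 'I_N -> R,
     (forall n, 0 <= alpha n) /\ \sum_(n < N) alpha n = 1 /\
     eta = pospart (fun q => rho q - \sum_(n < N) alpha n * S n q) /\
     exists v : 'I_Q -> R,
       (forall q, 0 <= v q) /\
       (forall m : 'I_N, 0 < alpha m -> forall k : 'I_N, dot v (S k) <= dot v (S m)) /\
       (forall q, v q = 0 <-> eta q = 0).
Proof.
have hX : forall q, cnv (fun t => X t q / t%:R) (eta q) := hconv mw0.
have [f [hf [alpha ha]]] := bw_multi (fun t n => freq_bd t n).
have hfk := strinc_ge hf.
have hf1 : exists M, forall k, (M <= k)%N -> (0 < f k)%N.
  by exists 1%N => k hk; apply: leq_trans hk (hfk k).
exists alpha; split.
  move=> n; apply: (cnv_le (cnv_const 0) (ha n)); exists 0%N => k _; exact: freq_ge0.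
split.
  have hs := cnv_sum (index_enum 'I_N) ha.
  apply: (cnv_unique hs); apply: (cnv_ev (cnv_const 1)).
  by case: hf1 => M hM; exists M => k hk; rewrite freq_sum // hM.
split; last first.
  exists (fun q => D q q * eta q); split.
    by move=> q; rewrite mulr_ge0 // ltW // hD.2.
  split; last first.
    move=> q; split; last by move=> ->; rewrite mulr0.
    move/eqP; rewrite mulf_eq0 => /orP[/eqP h|/eqP //].
    by have := hD.2 q; rewrite h ltxx.
  move=> m hm k; rewrite leNgt; apply/negP => hlt.
  set gap := dot (fun q => D q q * eta q) (S k) - dot (fun q => D q q * eta q) (S m).
  have hgap : 0 < gap by rewrite subr_gt0.
  have hc : cnv (fun t => \sum_(q < Q) (S k q - S m q) * D q q * (X t q / t%:R)) gap.
    have -> : gap = \sum_(q < Q) (S k q - S m q) * D q q * eta q.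
      by rewrite /gap /dot -sumrB; apply: eq_bigr => q _; ring.
    by apply: cnv_sum => q; apply: cnv_mull.
  have [M hM] := hc gap hgap.
  have hnm : forall s, (M <= s)%N -> sigma0 s != m.
    move=> s hs; apply/eqP => he.
    have h1 := mw0 s k; rewrite /= he in h1.
    have h2 := hM s hs.
    have hid : \sum_(q < Q) (S k q - S m q) * D q q * (X s q / s%:R) =
        (dot (S k) (mxv D (X s)) - dot (S m) (mxv D (X s))) / s%:R.
      rewrite /dot -sumrB mulr_suml; apply: eq_bigr => q _.
      rewrite !(mxv_pos_diag _ _ hD); rewrite /X; ring.
    rewrite hid in h2.
    have h3 : (dot (S k) (mxv D (X s)) - dot (S m) (mxv D (X s))) / s%:R <= 0.
      by apply: mulr_le0_ge0; [rewrite subr_le0 | rewrite invr_ge0].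
    move: h2; rewrite ltr_norml => /andP[h4 _]; lra.
  have hcnt : forall t, \sum_(s < t) ((sigma0 s == m)%:R : R) <= (minn t M)%:R.
    elim=> [|t IH]; first by rewrite big_ord0 min0n.
    rewrite big_ord_recr /=; case: (ltnP t M) => htM.
      rewrite (minn_idPl (ltnW htM)) in IH; rewrite (minn_idPl htM) -natr1.
      by apply: lerD => //; exact: indic_le1.
    rewrite (negbTE (hnm t htM)) addr0; apply: le_trans IH _.
    by rewrite ler_nat (minn_idPr htM) (minn_idPr (leqW htM)).
  have hle : alpha m <= 0.
    apply: (cnv_le (ha m) (cnv_subseq hf (cnv_inv (M%:R : R)))).
    exists 0%N => k0 _; rewrite /freq; apply: ler_wpM2r; first by rewrite invr_ge0.
    by apply: le_trans (hcnt _) _; rewrite ler_nat geq_minr.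
  by move: hm; rewrite ltNge hle.
apply/funext => q; rewrite /pospart.
set T := \sum_(n < N) alpha n * S n q.
have hG : cnv (fun k => \sum_(n < N) freq (f k) n * S n q) T.
  by apply: cnv_sum => n; apply: cnv_mulr.
have hXk := cnv_subseq hf (hX q).
have hAk := cnv_subseq hf (hrho q).
have [h0|hpos] : eta q = 0 \/ 0 < eta q.
  by move: (heta0 q); rewrite le_eqVlt => /orP[/eqP<-|h]; [left|right].
  have hle : rho q - eta q <= T.
    apply: (cnv_le (cnv_sub hAk hXk) hG).
    case: hf1 => M hM; exists M => k hk.
    have hpos : (0 < f k)%N by apply: hM.
    have hpos' : 0 < (f k)%:R :> R by rewrite ltr0n.
    rewrite -mulrBl ler_pdivrMr // mulrC -Ssum //.
    rewrite (Xid (f k) q) opprB addrA addrAC subrr add0r.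
    by apply: ler_sum => s _; case: (min_cases (S (sigma0 s) q) (X s q)) => [[-> _]|[-> h]] //; exact: ltW.
  rewrite h0 in hle *.
  by case: (max_cases 0 (rho q - T)) => [[-> h]|[-> h]] //; lra.
have he2 : 0 < eta q / 2 by rewrite divr_gt0.
have [M0 hM0] := hX q _ he2.
have hcS0 : 0 <= cS S by apply: sumr_ge0 => n _; apply: sumr_ge0.
have hx1 : 0 <= 2 * cS S / eta q by rewrite divr_ge0 // ?mulr_ge0 // ltW.
set M1 := (Num.Def.archi_bound (2 * cS S / eta q)).+1.
set M := maxn 1 (maxn M0 M1).
have hbig : forall s, (M <= s)%N -> cS S <= X s q.
  move=> s hs.
  have hs0 : (M0 <= s)%N by apply: leq_trans hs; rewrite leq_max leq_max leqnn orbT.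
  have hs1 : (M1 <= s)%N by apply: leq_trans hs; rewrite !leq_max leqnn !orbT.
  have hsp : (0 < s)%N by apply: leq_trans hs; rewrite leq_max leqnn.
  have hsp' : 0 < s%:R :> R by rewrite ltr0n.
  have h1 := hM0 s hs0; move: h1; rewrite ltr_norml => /andP[h1 _].
  have h2 : 2 * cS S / eta q < s%:R.
    apply: lt_le_trans (archi_boundP hx1) _; rewrite ler_nat; exact: ltnW.
  move: h2; rewrite ltr_pdivrMr // => h2.
  have h3 : eta q / 2 < X s q / s%:R by lra.
  move: h3; rewrite ltr_pdivlMr // => h3.
  have : X s q * 2 > s%:R * eta q by move: h3; rewrite mulrC mulrA => h3; nra.
  move=> h4; nra.
set E := fun t => \sum_(s < t) (S (sigma0 s) q - Num.min (S (sigma0 s) q) (X s q)).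
have hE : forall d, E (M + d)%N = E M.
  elim=> [|d IH]; first by rewrite addn0.
  rewrite addnS /E big_ord_recr /= -/(E _) IH.
  have hb := hbig (M + d)%N (leq_addr _ _).
  have hsc := S_le_c hS (sigma0 (M + d)%N) q.
  rewrite min_l ?subrr ?addr0 //; exact: le_trans hsc hb.
have heq : T = rho q - eta q.
  apply: (cnv_unique hG).
  have hw := cnv_add (cnv_sub hAk hXk) (cnv_subseq hf (cnv_inv (E M))).
  rewrite addr0 in hw; apply: (cnv_ev hw).
  exists M => k hk.
  have hMk : (M <= f k)%N by apply: leq_trans hk (hfk k).
  have hpos' : (0 < f k)%N by apply: leq_trans hMk; rewrite leq_max leqnn.
  have hpr : 0 < (f k)%:R :> R by rewrite ltr0n.
  have hEk : E (f k) = E M by rewrite -(subnKC hMk) hE.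
  have hid : X (f k) q = \sum_(s < f k) A s q - \sum_(s < f k) S (sigma0 s) q + E (f k).
    by rewrite Xid /E sumrB; ring.
  rewrite hid Ssum // -hEk; field; lra.
rewrite heq (_ : rho q - (rho q - eta q) = eta q); last by ring.
by rewrite max_r // ltW.
Qed.

End OnlyIf.


Unset Implicit Arguments.
Theorem proposition3 (R : realType) (Q N : nat)
  (S : 'I_N -> 'I_Q -> R) (A : nat -> 'I_Q -> R) (Abar : 'I_Q -> R)
  (rho eta : 'I_Q -> R) :
  (0 < N)%N ->
  (forall n q, 0 <= S n q) ->
  (forall t q, 0 <= A t q <= Abar q) ->
  (forall q, 0 < rho q) ->
  (forall q, (fun t : nat => (\sum_(s < t) A s q) / t%:R) @ \oo --> rho q) ->
  ~ in_region S rho ->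
  (forall q, 0 <= eta q) ->
  (exists D : 'M[R]_Q, pos_diag D /\
     forall sigma : nat -> 'I_N, maxweight S D A sigma ->
       forall q, (fun t : nat => qlen A (fun s => S (sigma s)) t q / t%:R)
                   @ \oo --> eta q)
  <->
  (exists alpha : 'I_N -> R,
     (forall n, 0 <= alpha n) /\ \sum_(n < N) alpha n = 1 /\
     eta = pospart (fun q => rho q - \sum_(n < N) alpha n * S n q) /\
     exists v : 'I_Q -> R,
       (forall q, 0 <= v q) /\
       (forall m : 'I_N, 0 < alpha m -> forall k : 'I_N, dot v (S k) <= dot v (S m)) /\
       (forall q, v q = 0 <-> eta q = 0)).
Proof.
move=> hN hS hA _ hrhoL _ heta0.
have hrho : forall q, cnv (fun t => (\sum_(s < t) A s q) / t%:R) (rho q).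
  by move=> q; apply/cnv_cvg; exact: hrhoL.
split.
  move=> [D [hD hc]].
  apply: (only_if_core hS hrho hN heta0 hD).
  by move=> sigma hmw q; apply/cnv_cvg; exact: hc.
move=> [alpha [ha0 [ha1 [heta [v [hv0 [hv hve]]]]]]].
pose dd := fun q => if eta q == 0 then 1 else v q / eta q.
have hdd : forall q, 0 < dd q.
  move=> q; rewrite /dd; case: eqP => h //.
  have hvq : v q != 0 by apply/eqP => /hve.
  rewrite divr_gt0 //; first by rewrite lt0r hvq hv0.
  by rewrite lt0r heta0 andbT; apply/eqP.
have hddv : forall q, dd q * eta q = v q.
  move=> q; rewrite /dd; case: eqP => h.
    by rewrite h mulr0; apply/esym/hve.
  by rewrite divfK //; apply/eqP.
exists (diag_mx (\row_i dd i)); split; first exact: pos_diag_diag.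
move=> sigma hmw q; apply/cnv_cvg.
exact: (Xconv hS hA heta0 ha0 ha1 heta hv hdd hddv hmw q hrho).
Qed.
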